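(* With probability at least $1-o_n(1)$, $\mathbf f\sim\mathcal D^{J}_{\mathrm{no}}$ is $0.2$-far from every $(n/2)$-junta, i.e. $\Pr_x[\mathbf f(x)\ne g(x)]\ge 0.2$ for every $g:\{0,1\}^n\to\{0,1\}$ depending on at most $n/2$ coordinates.
   Context: Let $n$ be even and $a=n/2$. For a set $A$ of size $a$ and $z\in\{0,1\}^A$ with Hamming weight $|z|$: $h^{(-,0)}(z)=1$ iff $|z|>a/2+0.05\sqrt a$; $h^{(-,1)}(z)=1$ iff $|z|<a/2-0.05\sqrt a$. A draw $\mathbf f\sim\mathcal D^{J}_{\mathrm{no}}$: choose $\mathbf A\subseteq[n]$ uniformly of size $a$, $\mathbf C=[n]\setminus\mathbf A$, and a uniformly random function $\mathbf b:\{0,1\}^{\mathbf C}\to\{0,1\}$; set $\mathbf f(x)=h^{(-,\mathbf b(x_{\mathbf C}))}(x_{\mathbf A})$, where $x_B$ is the restriction of $x$ to $B$. *)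

(* Defs.v *)
From HB Require Import structures.
From mathcomp Require Import all_boot all_order all_algebra.
From mathcomp Require Import boolp reals.
Set Implicit Arguments. Unset Strict Implicit. Unset Printing Implicit Defensive.
Import Order.TTheory GRing.Theory Num.Theory.
Local Open Scope ring_scope.

Definition pt (n : nat) := {ffun 'I_n -> bool}.

Definition wt n (A : {set 'I_n}) (x : pt n) : nat := #|[set i in A | x i]|.

Section D.
Variable R : realType.

Definition h0 n (A : {set 'I_n}) (x : pt n) : bool :=
  let a := (n./2)%:R : R in
  (wt A x)%:R > a / 2 + (1/20) * Num.sqrt a.
Definition h1 n (A : {set 'I_n}) (x : pt n) : bool :=
  let a := (n./2)%:R : R in
  (wt A x)%:R < a / 2 - (1/20) * Num.sqrt a.

(* restriction x_C, represented as the point agreeing with x on C and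
   false outside C *)
Definition restr n (C : {set 'I_n}) (x : pt n) : pt n :=
  [ffun i => (i \in C) && x i].

Definition fno n (A : {set 'I_n}) (b : {ffun pt n -> bool}) (x : pt n) : bool :=
  if b (restr (~: A) x) then h1 A x else h0 A x.

Definition is_junta n (k : nat) (g : pt n -> bool) : Prop :=
  exists S : {set 'I_n}, (#|S| <= k)%N /\
    forall x y : pt n, (forall i, i \in S -> x i = y i) -> g x = g y.

Definition dist n (f g : pt n -> bool) : R :=
  #|[set x : pt n | f x != g x]|%:R / (2 ^ n)%:R.

Definition far_from_juntas n (eps : R) (k : nat) (f : pt n -> bool) : Prop :=
  forall g : pt n -> bool, is_junta k g -> eps <= dist f g.

(* Pr_{f ~ D^J_no}[P f]: A uniform among a-subsets, b uniform.
   (b uniform on all functions pt n -> bool; only its values on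
   restricted points matter, which are then uniform on {0,1}^C.) *)
Definition prob_no n (P : (pt n -> bool) -> Prop) : R :=
  let As := [set A : {set 'I_n} | #|A| == n./2] in
  (\sum_(A in As)
      (#|[set b : {ffun pt n -> bool} | `[< P (fno A b) >] ]|%:R
         / (#|{ffun pt n -> bool}|)%:R)) / (#|As|)%:R.
End D.

(* Main.v *)
Require Import Defs.
From HB Require Import structures.
From mathcomp Require Import all_boot all_order all_algebra.
From mathcomp Require Import boolp reals.
From mathcomp Require Import zify ring lra.
Import Order.TTheory GRing.Theory Num.Theory.
Set Implicit Arguments. Unset Strict Implicit. Unset Printing Implicit Defensive.

Lemma bin_step n m : (2 * m < n)%N -> ('C(n, m) <= 'C(n, m.+1))%N.
Proof.
move=> h.
have e := mul_bin_left n m.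
have : (m.+1 * 'C(n, m) <= m.+1 * 'C(n, m.+1))%N.
  rewrite e; apply: leq_mul => //; lia.
by rewrite leq_pmul2l.
Qed.

Lemma half_spec n : n = (odd n + 2 * n./2)%N.
Proof. by rewrite -{1}(odd_double_half n) -mul2n. Qed.

Lemma bin_le_half_low n w : (w <= n./2)%N -> ('C(n, w) <= 'C(n, n./2))%N.
Proof.
move=> h; rewrite -(subnK h).
have hs := half_spec n.
have : (n./2 - w + w <= n./2)%N by rewrite subnK.
elim: (n./2 - w)%N => [//|k IH] hk.
apply: (leq_trans (IH (ltnW hk))); rewrite addSn; apply: bin_step.
lia.
Qed.

Lemma bin_le_half n w : ('C(n, w) <= 'C(n, n./2))%N.
Proof.
have hs := half_spec n.
case: (leqP w n./2) => h; first exact: bin_le_half_low.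
case: (leqP w n) => hw; last by rewrite bin_small.
rewrite -bin_sub //; apply: bin_le_half_low; lia.
Qed.

Lemma central_even m : ('C(m.*2, m) ^ 2 * (m.*2.+1) <= 16 ^ m)%N.
Proof.
elim: m => [//|m IH].
set c := 'C(m.*2, m).
have hd : (m.+1 * 'C(m.*2.+1, m) = m.*2.+1 * c)%N.
  have := mul_bin_diag m.*2.+1 m; rewrite /= => ->.
  have hle : (m.+1 <= m.*2.+1)%N by rewrite ltnS -addnn leq_addl.
  rewrite -(bin_sub hle); congr (_ * 'C(_, _))%N.
  by rewrite subSS -addnn addnK.
have he : ('C(m.+1.*2, m.+1) = 2 * 'C(m.*2.+1, m))%N.
  have := mul_bin_diag m.+1.*2 m; rewrite doubleS /= => e.
  apply/eqP; rewrite -(eqn_pmul2l (ltn0Sn m)) -e; apply/eqP.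
  rewrite -!mul2n; ring.
set d := 'C(m.*2.+1, m) in hd he *.
rewrite he.
have key : (4 * (m.*2.+1 * (m.+1.*2.+1)) <= 16 * m.+1 ^ 2)%N.
  rewrite !doubleS -!mul2n; nia.
have h1 : ((m.+1 ^ 2) * ((2 * d) ^ 2 * (m.+1.*2.+1)) <= (m.+1 ^ 2) * (16 * 16 ^ m))%N.
  have -> : ((m.+1 ^ 2) * ((2 * d) ^ 2 * (m.+1.*2.+1)) = (4 * (m.*2.+1 * (m.+1.*2.+1))) * (c ^ 2 * m.*2.+1))%N.
    have -> : ((m.+1 ^ 2) * ((2 * d) ^ 2 * (m.+1.*2.+1)) = 4 * (m.+1 * d) ^ 2 * (m.+1.*2.+1))%N by ring.
    rewrite hd; ring.
  apply: (@leq_trans ((16 * m.+1 ^ 2) * 16 ^ m))%N.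
    by apply: leq_mul.
  by rewrite mulnCA mulnA.
rewrite leq_pmul2l ?expn_gt0 // in h1; by rewrite [16 ^ m.+1]expnS.
Qed.

Lemma central_odd m : ('C(m.*2.+1, m) ^ 2 * (m.*2.+2) <= 4 ^ (m.*2.+1))%N.
Proof.
have IH := central_even m.
set c := 'C(m.*2, m) in IH.
have hd : (m.+1 * 'C(m.*2.+1, m) = m.*2.+1 * c)%N.
  have := mul_bin_diag m.*2.+1 m; rewrite /= => ->.
  have hle : (m.+1 <= m.*2.+1)%N by rewrite ltnS -addnn leq_addl.
  rewrite -(bin_sub hle); congr (_ * 'C(_, _))%N.
  by rewrite subSS -addnn addnK.
set d := 'C(m.*2.+1, m) in hd *.
have e4 : (4 ^ (m.*2.+1) = 4 * 16 ^ m)%N.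
  by rewrite expnS -mul2n expnM.
rewrite e4.
have key : (m.*2.+1 * m.*2.+2 <= 4 * m.+1 ^ 2)%N.
  rewrite -!mul2n; nia.
have h1 : ((m.+1 ^ 2) * (d ^ 2 * m.*2.+2) <= (m.+1 ^ 2) * (4 * 16 ^ m))%N.
  have -> : ((m.+1 ^ 2) * (d ^ 2 * m.*2.+2) = (m.*2.+1 * m.*2.+2) * (c ^ 2 * m.*2.+1))%N.
    have -> : ((m.+1 ^ 2) * (d ^ 2 * m.*2.+2) = (m.+1 * d) ^ 2 * m.*2.+2)%N by ring.
    rewrite hd; ring.
  apply: (@leq_trans ((4 * m.+1 ^ 2) * 16 ^ m))%N.
    by apply: leq_mul.
  by rewrite mulnCA mulnA.
by rewrite leq_pmul2l ?expn_gt0 in h1.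
Qed.

Lemma bin_sq_bound a w : ('C(a, w) ^ 2 * a.+1 <= 4 ^ a)%N.
Proof.
apply: (@leq_trans ('C(a, a./2) ^ 2 * a.+1)).
  by apply: leq_mul => //; rewrite leq_exp2r //; apply: bin_le_half.
have := odd_double_half a; move: (a./2) => k.
case: (odd a) => /= ea; subst a.
  rewrite add1n; exact: central_odd.
have := central_even k; rewrite (_ : 16 = 4 ^ 2)%N // -expnM mul2n.
by [].
Qed.

Definition flipf (T : finType) (p : T) (f : {ffun T -> bool}) : {ffun T -> bool} :=
  [ffun z => if z == p then ~~ f z else f z].

Lemma flipfE (T : finType) (p : T) (f : {ffun T -> bool}) z :
  flipf p f z = if z == p then ~~ f z else f z.
Proof. by rewrite ffunE. Qed.

Lemma flipfK (T : finType) (p : T) : involutive (flipf p).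
Proof.
by move=> f; apply/ffunP => z; rewrite !flipfE; case: eqP => // _; rewrite negbK.
Qed.

Lemma flipf_neq (T : finType) (p : T) (f : {ffun T -> bool}) : flipf p f != f.
Proof.
apply/eqP => /ffunP /(_ p); rewrite flipfE eqxx; by case: (f p).
Qed.

Definition FS n (B : {set 'I_n}) : {set pt n} := [set u | restr B u == u].

Definition supp n (u : pt n) : {set 'I_n} := [set i | u i].

Lemma FSP n (B : {set 'I_n}) (u : pt n) : reflect (forall i, u i -> i \in B) (u \in FS B).
Proof.
rewrite inE; apply: (iffP eqP).
  by move=> <- i; rewrite ffunE => /andP [].
move=> h; apply/ffunP => i; rewrite ffunE.
by case e: (u i); rewrite ?andbF // andbT h.
Qed.

Lemma wt_supp n (A : {set 'I_n}) (u : pt n) : u \in FS A -> wt A u = #|supp u|.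
Proof.
move/FSP => h; rewrite /wt /supp; apply: eq_card => i; rewrite !inE.
by case e: (u i); rewrite ?andbF ?andbT // h.
Qed.

Lemma supp_inj n (B : {set 'I_n}) : {in FS B &, injective (@supp n)}.
Proof.
move=> u v _ _ e; apply/ffunP => i.
have := congr1 (fun X : {set 'I_n} => i \in X) e; by rewrite /supp !inE.
Qed.

Lemma supp_img n (A : {set 'I_n}) (P : nat -> bool) :
  (@supp n) @: [set u in FS A | P (wt A u)] = [set X : {set 'I_n} | (X \subset A) && P #|X|].
Proof.
apply/setP => X; rewrite inE; apply/imsetP/idP.
  move=> [u]; rewrite inE => /andP [hu hP] ->.
  rewrite -(wt_supp hu) hP andbT; apply/subsetP => i; rewrite inE.
  by move/FSP: hu; apply.
move=> /andP [hX hP]; exists [ffun i => i \in X].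
  have hu : [ffun i => i \in X] \in FS A.
    by apply/FSP => i; rewrite ffunE => /(subsetP hX).
  rewrite inE hu wt_supp //=.
  suff -> : supp [ffun i => i \in X] = X by [].
  by apply/setP => i; rewrite inE ffunE.
by apply/setP => i; rewrite inE ffunE.
Qed.

Lemma card_FS_P n (A : {set 'I_n}) (P : nat -> bool) :
  #|[set u in FS A | P (wt A u)]| = #|[set X : {set 'I_n} | (X \subset A) && P #|X|]|.
Proof.
rewrite -(supp_img A P) card_in_imset //.
move=> u v /setIdP [hu _] /setIdP [hv _]. move=> e; apply: (supp_inj _ _ e). exact hu. exact hv.
Qed.

Lemma card_FS n (A : {set 'I_n}) : #|FS A| = (2 ^ #|A|)%N.
Proof.
have := card_FS_P A (fun _ => true).
rewrite -card_powerset /powerset.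
have -> : [set u in FS A | true] = FS A by apply/setP => u; rewrite inE andbT.
by move=> ->; apply: eq_card => X; rewrite !inE andbT.
Qed.

Lemma card_FS_wt n (A : {set 'I_n}) w :
  #|[set u in FS A | wt A u == w]| = 'C(#|A|, w).
Proof. by rewrite (card_FS_P A (fun k => k == w)) cards_draws. Qed.

Definition merge n (A : {set 'I_n}) (u v : pt n) : pt n :=
  [ffun i => if i \in A then u i else v i].

Lemma restrE n (B : {set 'I_n}) (x : pt n) i : restr B x i = (i \in B) && x i.
Proof. by rewrite ffunE. Qed.

Lemma restr_FS n (B : {set 'I_n}) (x : pt n) : restr B x \in FS B.
Proof. by apply/FSP => i; rewrite restrE => /andP []. Qed.

Lemma restr_merge_l n (A : {set 'I_n}) u v : u \in FS A -> restr A (merge A u v) = u.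
Proof.
move/FSP => h; apply/ffunP => i; rewrite restrE ffunE.
by case: (boolP (i \in A)) => // hi; case e: (u i) => //; have := h i e; rewrite (negbTE hi).
Qed.

Lemma restr_merge_r n (A : {set 'I_n}) u v : v \in FS (~: A) -> restr (~: A) (merge A u v) = v.
Proof.
move/FSP => h; apply/ffunP => i; rewrite restrE ffunE inE.
case: (boolP (i \in A)) => hi //=; case e: (v i) => //; have := h i e; by rewrite inE hi.
Qed.

Lemma merge_restr n (A : {set 'I_n}) x : merge A (restr A x) (restr (~: A) x) = x.
Proof. by apply/ffunP => i; rewrite !ffunE inE; case: (i \in A). Qed.

Lemma decomp n (A : {set 'I_n}) (P : pt n -> pt n -> bool) :
  #|[set x | P (restr A x) (restr (~: A) x)]| =
  (\sum_(v in FS (~: A)) #|[set u in FS A | P u v]|)%N.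
Proof.
rewrite -sum1_card (partition_big (restr (~: A)) (fun v => v \in FS (~: A))) /=;
  last by move=> x _; exact: restr_FS.
apply: eq_bigr => v hv.
rewrite sum1dep_card.
have -> : [set x | (x \in [set x | P (restr A x) (restr (~: A) x)]) && (restr (~: A) x == v)]
   = (fun u => merge A u v) @: [set u in FS A | P u v].
  apply/setP => x; rewrite !inE; apply/andP/imsetP.
    move=> [hP /eqP hv']; exists (restr A x); first by rewrite inE restr_FS -hv'.
    by rewrite -hv' merge_restr.
  move=> [u /setIdP [hu hP] ->]; rewrite restr_merge_l // restr_merge_r //.
rewrite card_in_imset // => u1 u2 /setIdP [h1 _] /setIdP [h2 _] e.
by rewrite -(restr_merge_l v h1) e restr_merge_l.
Qed.

Lemma half_count (X : finType) (p q : X) (Q : pred {ffun X -> bool}) :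
  p != q -> (forall b, Q (flipf p b) = Q b) ->
  (2 * #|[set b : {ffun X -> bool} | Q b && (b p != b q)]| = #|[set b : {ffun X -> bool} | Q b]|)%N.
Proof.
move=> hpq hQ.
have hqp : (q == p) = false by rewrite eq_sym (negbTE hpq).
have e : flipf p @: [set b : {ffun X -> bool} | Q b && (b p != b q)] = [set b : {ffun X -> bool} | Q b && (b p == b q)].
  apply/setP => b; rewrite inE; apply/imsetP/idP.
    move=> [c]; rewrite inE => /andP [hc hne] ->.
    rewrite hQ hc !flipfE eqxx hqp /=.
    by move: hne; case: (c p); case: (c q).
  move=> /andP [hb heq]; exists (flipf p b); last by rewrite flipfK.
  rewrite inE hQ hb !flipfE eqxx hqp /=.
  by move: heq; case: (b p); case: (b q).
have c1 : #|[set b : {ffun X -> bool} | Q b && (b p != b q)]| = #|[set b : {ffun X -> bool} | Q b && (b p == b q)]|.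
  by rewrite -e card_imset //; apply: (can_inj (flipfK p)).
rewrite -(cardsID [set b : {ffun X -> bool} | b p != b q] [set b : {ffun X -> bool} | Q b]).
have -> : [set b : {ffun X -> bool} | Q b] :&: [set b : {ffun X -> bool} | b p != b q] = [set b : {ffun X -> bool} | Q b && (b p != b q)].
  by apply/setP => b; rewrite !inE.
have -> : [set b : {ffun X -> bool} | Q b] :\: [set b : {ffun X -> bool} | b p != b q] = [set b : {ffun X -> bool} | Q b && (b p == b q)].
  by apply/setP => b; rewrite !inE negbK andbC.
by rewrite -c1 addnn mul2n.
Qed.

Lemma sq_id (x d : nat) : ((x - 2 * d) ^ 2 + (2 * d - x) ^ 2 + 4 * x * d = x ^ 2 + 4 * d ^ 2)%N.
Proof.
case: (leqP (2 * d) x) => h.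
  have [y ->] : exists y, x = (y + 2 * d)%N by exists (x - 2 * d)%N; rewrite subnK.
  rewrite addnK (_ : 2 * d - (y + 2 * d) = 0)%N ?addn0; last by lia.
  ring.
have [y E] : exists y, (2 * d = y + x)%N by exists (2 * d - x)%N; rewrite subnK // ltnW.
rewrite E addnK (_ : x - (y + x) = 0)%N ?add0n; last by lia.
have -> : (4 * x * d = 2 * x * (2 * d))%N by ring.
have -> : (4 * d ^ 2 = (2 * d) ^ 2)%N by ring.
rewrite E; ring.
Qed.

Section Cheb.
Variables (X : finType) (V : {set X}) (fl : X -> X).
Hypothesis flV : forall v, v \in V -> fl v \in V.
Hypothesis flne : forall v, fl v != v.
Hypothesis flK : involutive fl.

Definition Dc (b : {ffun X -> bool}) : nat := #|[set v in V | b v != b (fl v)]|.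
Let Tt := #|{ffun X -> bool}|.

Lemma card_sum (Y : finType) (W : {set Y}) (P : pred Y) :
  #|[set v in W | P v]| = (\sum_(v in W) P v)%N.
Proof.
rewrite -sum1_card (eq_bigl (fun v => (v \in W) && P v)); last by move=> v; rewrite inE.
by rewrite big_mkcondr /=; apply: eq_bigr => v _; case: (P v).
Qed.

Lemma card_all (Y : finType) (P : pred Y) :
  #|[set v | P v]| = (\sum_v P v)%N.
Proof.
have := card_sum [set: Y] P.
have -> : [set v in [set: Y] | P v] = [set v | P v] by apply/setP => v; rewrite !inE.
by move=> ->; apply: eq_bigl => v; rewrite inE.
Qed.

Lemma sumD : (2 * \sum_b Dc b = #|V| * Tt)%N.
Proof.
under eq_bigr do rewrite /Dc card_sum.
rewrite exchange_big big_distrr /= -sum1_card big_distrl /=.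
apply: eq_bigr => v hv; rewrite mul1n -card_all.
rewrite (_ : [set b : {ffun X -> bool} | b v != b (fl v)] = [set b : {ffun X -> bool} | true && (b v != b (fl v))]); last by apply/setP => b.
rewrite half_count //; last by rewrite eq_sym flne.
by rewrite /Tt; apply: eq_card => b; rewrite inE.
Qed.
Definition Iv (v : X) (b : {ffun X -> bool}) := b v != b (fl v).

Lemma count_I v : (2 * #|[set b | Iv v b]| = Tt)%N.
Proof.
rewrite (_ : [set b | Iv v b] = [set b : {ffun X -> bool} | true && (b v != b (fl v))]); last by apply/setP => b; rewrite !inE.
rewrite half_count //; last by rewrite eq_sym flne.
by rewrite /Tt; apply: eq_card => b; rewrite inE.
Qed.

Lemma pair_count v w :
  (4 * #|[set b | Iv v b && Iv w b]| = if (w == v) || (w == fl v) then 2 * Tt else Tt)%N.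
Proof.
case: (boolP ((w == v) || (w == fl v))) => hw.
  have -> : [set b | Iv v b && Iv w b] = [set b | Iv v b].
    apply/setP => b; rewrite !inE.
    case/orP: hw => /eqP ->; first by rewrite andbb.
    by rewrite /Iv flK eq_sym andbb.
  by rewrite -(count_I v); lia.
have hwv : w != v by move: hw; case: (w == v).
have hwf : w != fl v by move: hw; case: (w == fl v); rewrite ?orbT.
have hfw : fl w != v.
  apply/eqP => e; move/eqP: hwf; apply; by rewrite -e flK.
have hvf : v != fl v by rewrite eq_sym flne.
have inv : forall b, Iv w (flipf v b) = Iv w b.
  by move=> b; rewrite /Iv !flipfE (negbTE hwv) (negbTE hfw).
have h1 := half_count hvf inv.
have -> : [set b | Iv v b && Iv w b] = [set b | Iv w b && (b v != b (fl v))].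
  by apply/setP => b; rewrite !inE andbC.
rewrite (_ : 4 = 2 * 2)%N // -mulnA h1 -(count_I w).
by congr (2 * #|_|)%N; apply/setP => b; rewrite !inE.
Qed.
Lemma sumD2 : (4 * \sum_b Dc b ^ 2 = #|V| * (#|V| + 2) * Tt)%N.
Proof.
have e1 : forall b, (Dc b ^ 2 = \sum_(v in V) \sum_(w in V) (Iv v b && Iv w b))%N.
  move=> b; rewrite /Dc card_sum expnS expn1 big_distrlr /=.
  by apply: eq_bigr => v _; apply: eq_bigr => w _; rewrite mulnb.
under eq_bigr do rewrite e1.
rewrite exchange_big big_distrr /=.
rewrite (_ : #|V| * (#|V| + 2) * Tt = \sum_(v in V) ((#|V| + 2) * Tt))%N; last first.
  rewrite big_const iter_addn_0; lia.
apply: eq_bigr => v hv.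
rewrite exchange_big big_distrr /=.
under eq_bigr do rewrite -card_all pair_count.
have -> : (\sum_(w in V) (if (w == v) || (w == fl v) then 2 * Tt else Tt)
   = \sum_(w in V) (Tt + ((w == v) || (w == fl v)) * Tt))%N.
  by apply: eq_bigr => w _; case: ((w == v) || (w == fl v)); rewrite /= ?mul1n ?mul0n ?addn0 //; lia.
rewrite big_split /= -big_distrl /= -card_sum big_const iter_addn_0.
have -> : [set w in V | (w == v) || (w == fl v)] = [set v; fl v].
  apply/setP => w; rewrite !inE; case: (boolP ((w == v) || (w == fl v))); rewrite ?andbF //.
  by case/orP => /eqP ->; rewrite ?hv ?flV.
rewrite cards2 eq_sym flne; lia.
Qed.
Lemma cheb : (#|[set b | 50 * Dc b < 24 * #|V|]| * #|V| <= 1250 * Tt)%N.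
Proof.
set Xv := #|V|.
pose e b := ((Xv - 2 * Dc b) ^ 2 + (2 * Dc b - Xv) ^ 2)%N.
have he : forall b, (e b + 4 * Xv * Dc b = Xv ^ 2 + 4 * Dc b ^ 2)%N.
  by move=> b; rewrite /e sq_id.
have hsum : (\sum_b e b + 4 * Xv * \sum_b Dc b = Tt * Xv ^ 2 + 4 * \sum_b Dc b ^ 2)%N.
  rewrite big_distrr -big_split /= (eq_bigr _ (fun b _ => he b)) big_split /=.
  rewrite big_const iter_addn_0 [in RHS]big_distrr /= /Tt; ring.
have h1 := sumD; have h2 := sumD2; rewrite -/Xv -/Tt in h1 h2.
have Se : (\sum_b e b = 2 * Xv * Tt)%N.
  move: hsum h1 h2; set SE := (\sum_b e b)%N; set SD := (\sum_b Dc b)%N;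
  set SD2 := (\sum_b Dc b ^ 2)%N => hsum h1 h2.
  have : (SE + 2 * Xv * (2 * SD) = Tt * Xv ^ 2 + 4 * SD2)%N by rewrite -hsum; ring.
  rewrite h1 h2 => h3.
  move: h3; rewrite (_ : 2 * Xv * (Xv * Tt) = 2 * (Xv * Xv * Tt))%N; last by ring.
  rewrite (_ : Tt * Xv ^ 2 + Xv * (Xv + 2) * Tt = 2 * (Xv * Xv * Tt) + 2 * Xv * Tt)%N; last by ring.
  lia.
have hb : (#|[set b | 50 * Dc b < 24 * Xv]| * Xv ^ 2 <= 625 * (2 * Xv * Tt))%N.
  rewrite -Se big_distrr card_all big_distrl /=.
  apply: leq_sum => b _.
  case hbad: (50 * Dc b < 24 * Xv); rewrite ?mul0n // mul1n /e.
  have h25 : (Xv <= 25 * (Xv - 2 * Dc b))%N by lia.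
  apply: (@leq_trans (625 * (Xv - 2 * Dc b) ^ 2)); last by apply: leq_mul => //; apply: leq_addr.
  have -> : (625 * (Xv - 2 * Dc b) ^ 2 = (25 * (Xv - 2 * Dc b)) ^ 2)%N by ring.
  by rewrite leq_exp2r.
case: (posnP Xv) => hX; first by rewrite hX muln0.
rewrite (_ : 625 * (2 * Xv * Tt) = (1250 * Tt) * Xv)%N in hb; last by ring.
by rewrite expnS expn1 mulnA leq_pmul2r in hb.
Qed.


End Cheb.

Lemma wt_restr n (A : {set 'I_n}) (x : pt n) : wt A (restr A x) = wt A x.
Proof. by apply: eq_card => i; rewrite !inE restrE; case: (i \in A). Qed.

Lemma wt_flip n (A : {set 'I_n}) (x : pt n) i : i \notin A -> wt A (flipf i x) = wt A x.
Proof.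
move=> hi; apply: eq_card => j; rewrite !inE flipfE.
by case: eqP => // ->; rewrite (negbTE hi).
Qed.

Lemma restr_flip n (C : {set 'I_n}) (x : pt n) i : i \in C ->
  restr C (flipf i x) = flipf i (restr C x).
Proof.
move=> hi; apply/ffunP => j; rewrite restrE !flipfE restrE.
by case: eqP => // ->; rewrite hi.
Qed.

Lemma FS_flip n (C : {set 'I_n}) (v : pt n) i : i \in C -> v \in FS C -> flipf i v \in FS C.
Proof.
move=> hi /FSP h; apply/FSP => j; rewrite flipfE.
by case: eqP => [-> //|_]; apply: h.
Qed.

Section Det.
Variable R : realType.
Local Open Scope ring_scope.

Lemma h0_restr n (A : {set 'I_n}) x : h0 R A (restr A x) = h0 R A x.
Proof. by rewrite /h0 wt_restr. Qed.
Lemma h1_restr n (A : {set 'I_n}) x : h1 R A (restr A x) = h1 R A x.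
Proof. by rewrite /h1 wt_restr. Qed.
Lemma h0_flip n (A : {set 'I_n}) x i : i \notin A -> h0 R A (flipf i x) = h0 R A x.
Proof. by move=> hi; rewrite /h0 wt_flip. Qed.
Lemma h1_flip n (A : {set 'I_n}) x i : i \notin A -> h1 R A (flipf i x) = h1 R A x.
Proof. by move=> hi; rewrite /h1 wt_flip. Qed.

Lemma h01_excl n (A : {set 'I_n}) x : h0 R A x -> h1 R A x -> False.
Proof.
rewrite /h0 /h1 /= => H0 H1.
have hs : 0 <= (1/20 : R) * Num.sqrt (n./2)%:R by apply: mulr_ge0; [lra | apply: sqrtr_ge0].
move: H0 H1 hs; set w := (wt A x)%:R; set s := _ * Num.sqrt _; set m := (n./2)%:R / 2.
move=> H0 H1 hs; lra.
Qed.


Lemma dist_ge n (f g : pt n -> bool) :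
  (2 ^ n <= 5 * #|[set x | f x != g x]|)%N -> (1/5 : R) <= dist R f g.
Proof.
move=> h; rewrite /dist.
have hp : (0 : R) < (2 ^ n)%:R by rewrite ltr0n expn_gt0.
rewrite ler_pdivlMr //.
have -> : (1 / 5 : R) * (2 ^ n)%:R = (2 ^ n)%:R / 5%:R by rewrite mulrC mul1r. 
rewrite ler_pdivrMr ?ltr0n // -natrM ler_nat.
by rewrite mulnC.
Qed.

Lemma det n (A : {set 'I_n}) (b : {ffun pt n -> bool}) a :
  #|A| = a -> n = (a + a)%N ->
  (43 * 2 ^ a <= 50 * #|[set u in FS A | h0 R A u || h1 R A u]|)%N ->
  #|[set u in FS A | h0 R A u]| = #|[set u in FS A | h1 R A u]| ->
  (forall i, i \in ~: A -> 24 * 2 ^ a <= 50 * Dc (FS (~: A)) (flipf i) b)%N ->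
  far_from_juntas (1/5 : R) a (fno R A b).
Proof.
move=> hA hn hL hsym hD g [S [hS hg]].
apply: dist_ge.
set F := [set x | fno R A b x != g x].
set X := (2 ^ a)%N.
have cardC : #|~: A| = a.
  by have := cardsC A; rewrite hA card_ord; lia.
have hFC : #|FS (~: A)| = X by rewrite card_FS cardC.
have h2n : (2 ^ n = X * X)%N by rewrite hn expnD.
set H0 := #|[set u in FS A | h0 R A u]|.
have hLH : #|[set u in FS A | h0 R A u || h1 R A u]| = (H0 + H0)%N.
  have e1 : [set u in FS A | h0 R A u || h1 R A u] =
      [set u in FS A | h0 R A u] :|: [set u in FS A | h1 R A u].
    by apply/setP => u; rewrite !inE -andb_orr.
  have e2 : [set u in FS A | h0 R A u] :&: [set u in FS A | h1 R A u] = set0.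
    apply/setP => u; rewrite !inE; apply/negP => /andP [/andP [_ p0] /andP [_ p1]].
    exact: h01_excl p0 p1.
  by rewrite e1 cardsU e2 cards0 subn0 -hsym.
rewrite hLH in hL.
have fnoE : forall x, fno R A b x =
   (if b (restr (~: A) x) then h1 R A (restr A x) else h0 R A (restr A x)).
  by move=> x; rewrite /fno h0_restr h1_restr.
case: (boolP (~: A \subset S)) => hCS.
  have eS : ~: A = S.
    apply/eqP; rewrite eqEcard hCS cardC; exact: hS.
  have hgr : forall x, g x = g (restr (~: A) x).
    move=> x; apply: hg => i; rewrite -eS => hi; by rewrite restrE hi.
  pose P u v := (if b v then h1 R A u else h0 R A u) != g v.
  have eF : F = [set x | P (restr A x) (restr (~: A) x)].
    by apply/setP => x; rewrite !inE fnoE /P (hgr x).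
  have hF : (X * H0 <= #|F|)%N.
    rewrite eF decomp -hFC -sum_nat_const; apply: leq_sum => v hv.
    rewrite /P; case: (b v); case: (g v) => /=.
    - apply: subset_leq_card; apply/subsetP => u; rewrite !inE.
      case/andP => -> h0u; apply/negP => /eqP h1u; exact: h01_excl h0u h1u.
    - rewrite /H0 hsym; apply: subset_leq_card; apply/subsetP => u; rewrite !inE.
      by case/andP => -> ->.
    - rewrite /H0 hsym; apply: subset_leq_card; apply/subsetP => u; rewrite !inE.
      case/andP => -> h1u; apply/negP => /eqP h0u; exact: h01_excl h0u h1u.
    - apply: subset_leq_card; apply/subsetP => u; rewrite !inE.
      by case/andP => -> ->.
  rewrite h2n; nia.
have [i hiC hiS] := subsetPn hCS.
have hiA : i \notin A by move: hiC; rewrite inE.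
have hgf : forall x, g (flipf i x) = g x.
  move=> x; apply: hg => j hj; rewrite flipfE; case: eqP => // ej.
  by move: hiS; rewrite -ej hj.
pose Iv v := b v != b (flipf i v).
pose L := #|[set u in FS A | h0 R A u || h1 R A u]|.
set E := [set x | (h0 R A (restr A x) || h1 R A (restr A x)) && Iv (restr (~: A) x)].
have hE : #|E| = (L * Dc (FS (~: A)) (flipf i) b)%N.
  have := decomp A (fun u v => (h0 R A u || h1 R A u) && Iv v); rewrite /= => ->.
  rewrite /Dc card_sum big_distrr /=.
  apply: eq_bigr => v hv; rewrite /Iv; case: (b v != b (flipf i v)).
    by rewrite muln1; apply: eq_card => u; rewrite !inE andbT.
  by rewrite muln0; apply: eq_card0 => u; rewrite !inE !andbF.
have hEF : E \subset F :|: (flipf i) @: F.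
  apply/subsetP => x; rewrite inE => /andP [hout hI]; rewrite in_setU.
  case: (boolP (fno R A b x != g x)) => hx.
    by have -> : x \in F by rewrite inE.
  move: hx; rewrite negbK => /eqP hfx.
  suff -> : x \in [set flipf i x | x in F] by rewrite orbT.
  apply/imsetP; exists (flipf i x); last by rewrite flipfK.
  rewrite inE hgf -hfx !fnoE restr_flip //.
  have e0 : h0 R A (restr A (flipf i x)) = h0 R A (restr A x) by rewrite !h0_restr h0_flip.
  have e1 : h1 R A (restr A (flipf i x)) = h1 R A (restr A x) by rewrite !h1_restr h1_flip.
  rewrite e0 e1; move: hI hout (@h01_excl n A (restr A x)); rewrite /Iv.
  case: (b (restr (~: A) x)); case: (b (flipf i (restr (~: A) x)));
    case: (h0 R A (restr A x)); case: (h1 R A (restr A x)) => //= _ _ H; by case: H.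
have h2F : (#|E| <= 2 * #|F|)%N.
  apply: (leq_trans (subset_leq_card hEF)); apply: (leq_trans (leq_card_setU _ _)).
  by rewrite card_imset ?addnn ?mul2n //; apply: (can_inj (flipfK i)).
have hDi := hD i hiC.
rewrite hE in h2F; rewrite h2n.
move: hL hDi h2F; rewrite -/L; set DD := Dc _ _ b; nia.
Qed.
End Det.

Lemma band_count n (A : {set 'I_n}) (P : pred (pt n)) (tl k : nat) :
  (forall u, u \in FS A -> P u -> tl <= wt A u < tl + k)%N ->
  (#|[set u in FS A | P u]| <= k * 'C(#|A|, #|A|./2))%N.
Proof.
move=> hP.
rewrite card_sum.
apply: (@leq_trans (\sum_(u in FS A) \sum_(tl <= w < tl + k) (wt A u == w))%N).
  apply: leq_sum => u hu; case: (boolP (P u)) => // pu.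
  have hw : wt A u \in index_iota tl (tl + k) by rewrite mem_index_iota hP.
  by rewrite (bigD1_seq (wt A u)) ?iota_uniq //= eqxx.
rewrite exchange_big /=.
apply: (@leq_trans (\sum_(tl <= w < tl + k) 'C(#|A|, #|A|./2))%N).
  apply: leq_sum => w _.
  by rewrite -card_sum card_FS_wt bin_le_half.
by rewrite sum_nat_const_nat addnC addnK.
Qed.

Definition compl n (A : {set 'I_n}) (u : pt n) : pt n := [ffun j => (j \in A) && ~~ u j].

Lemma compl_FS n (A : {set 'I_n}) u : compl A u \in FS A.
Proof. by apply/FSP => j; rewrite ffunE => /andP []. Qed.

Lemma complK n (A : {set 'I_n}) u : u \in FS A -> compl A (compl A u) = u.
Proof.
move/FSP => h; apply/ffunP => j; rewrite !ffunE.
case: (boolP (j \in A)) => hj /=; first by rewrite negbK.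
by case e: (u j) => //; move: (h j e); rewrite (negbTE hj).
Qed.

Lemma wt_le n (A : {set 'I_n}) u : (wt A u <= #|A|)%N.
Proof. by apply: subset_leq_card; apply/subsetP => i; rewrite inE => /andP []. Qed.

Lemma wt_compl n (A : {set 'I_n}) u : wt A (compl A u) = (#|A| - wt A u)%N.
Proof.
rewrite /wt.
have -> : [set i in A | compl A u i] = A :\: [set i in A | u i].
  by apply/setP => i; rewrite !inE ffunE; case: (i \in A); rewrite /= ?andbT ?andbF.
rewrite cardsD; congr (_ - _)%N; apply: eq_card => i; rewrite !inE.
by case: (i \in A).
Qed.

Section Sym.
Variable R : realType.
Local Open Scope ring_scope.

Lemma h0_compl n (A : {set 'I_n}) u : #|A| = n./2 ->
  h1 R A (compl A u) = h0 R A u.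
Proof.
move=> hA; rewrite /h0 /h1 /= wt_compl natrB ?wt_le // hA.
set a := (n./2)%:R : R; set w := (wt A u)%:R : R; set s := _ * Num.sqrt a.
apply/idP/idP => h; lra.
Qed.

Lemma hsym n (A : {set 'I_n}) : #|A| = n./2 ->
  #|[set u in FS A | h0 R A u]| = #|[set u in FS A | h1 R A u]|.
Proof.
move=> hA.
have -> : [set u in FS A | h1 R A u] = compl A @: [set u in FS A | h0 R A u].
  apply/setP => u; rewrite inE; apply/andP/imsetP.
    move=> [hu h1u]; exists (compl A u); last by rewrite complK.
    by rewrite inE compl_FS -(h0_compl _ hA) complK.
  by move=> [v /setIdP [hv h0v] ->]; rewrite compl_FS (h0_compl _ hA).
rewrite card_in_imset // => u v /setIdP [hu _] /setIdP [hv _] e.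
by rewrite -(complK hu) e complK.
Qed.
End Sym.

Section LB.
Variable R : realType.
Local Open Scope ring_scope.

Lemma Lbound n (A : {set 'I_n}) a : #|A| = a -> n./2 = a -> (10000 <= a)%N ->
  (43 * 2 ^ a <= 50 * #|[set u in FS A | h0 R A u || h1 R A u]|)%N.
Proof.
move=> hA ha ha0.
set X := (2 ^ a)%N.
set out := [set u in FS A | h0 R A u || h1 R A u].
set band := [set u in FS A | ~~ h0 R A u && ~~ h1 R A u].
have hpart : (#|out| + #|band| = X)%N.
  rewrite /X -hA -card_FS -(cardsID [set u | h0 R A u || h1 R A u] (FS A)).
  congr (_ + _)%N; apply: eq_card => u; rewrite !inE ?negb_or //.
  by rewrite andbC.
suff hb : (50 * #|band| <= 7 * X)%N by lia.
set ar := (a%:R : R).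
set s := Num.sqrt ar.
have har : 0 <= ar by rewrite ler0n.
have hs2 : s ^+ 2 = ar by rewrite sqr_sqrtr.
have hs100 : 100 <= s.
  have -> : (100 : R) = Num.sqrt (100 ^+ 2) by rewrite sqrtr_sqr ger0_norm.
  rewrite /s ler_sqrt // /ar.
  by rewrite (_ : (100 : R) ^+ 2 = 10000%:R) ?ler_nat // -natrX.
set lo := ar / 2 - 1/20 * s.
set hi := ar / 2 + 1/20 * s.
have hlo : 0 <= lo.
  rewrite /lo; have : s <= s ^+ 2 by rewrite expr2 ler_peMl //; lra.
  rewrite hs2 => h; lra.
set tl := Num.truncn lo.
set d := Num.truncn (hi - lo).
have htl : (tl%:R : R) <= lo by rewrite truncn_le.
have htl2 : lo < (tl.+1)%:R by apply: truncnS_gt.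
have hd : (d%:R : R) <= hi - lo by rewrite truncn_le /hi /lo; nra.
have hd2 : hi - lo < (d.+1)%:R by apply: truncnS_gt.
have hband : (#|band| <= (d + 2) * 'C(#|A|, #|A|./2))%N.
  apply: band_count (tl) _ _ => u hu /andP [n0 n1].
  move: n0 n1; rewrite /h0 /h1 /= ha -/ar -/s -/lo -/hi.
  rewrite -!leNgt => n0 n1.
  apply/andP; split; first by rewrite -(ler_nat R); apply: le_trans htl n1.
  rewrite -(ltr_nat R) natrD; rewrite /lo /hi in n0 n1 htl htl2 hd hd2 *.
  rewrite !natrD in htl2 hd2 *; lra.
set M := 'C(#|A|, #|A|./2) in hband.
have hM : (M ^ 2 * a.+1 <= X ^ 2)%N.
  rewrite /M hA /X; have := bin_sq_bound a (a./2).
  by rewrite (_ : 4 ^ a = (2 ^ a) ^ 2)%N // -expnM mulnC expnM.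
have hMr : (M%:R : R) ^+ 2 * (ar + 1) <= (X%:R) ^+ 2.
  by rewrite /ar natr1 -!natrX -natrM ler_nat.
have hMs : (M%:R : R) * s <= X%:R.
  have hM0 : (0 : R) <= M%:R by rewrite ler0n.
  have hX0 : (0 : R) <= X%:R by rewrite ler0n.
  rewrite -hs2 in hMr; nra.
rewrite -(ler_nat R) !natrM.
have hb' : (#|band|%:R : R) <= (d + 2)%:R * M%:R by rewrite -natrM ler_nat.
have hM0 : (0 : R) <= M%:R by rewrite ler0n.
rewrite natrD in hb'.
have e1 : (d%:R : R) <= s / 10 by move: hd; rewrite /hi /lo; lra.
nra.
Qed.
End LB.

Lemma sq_le_pow2 a : (4 <= a)%N -> (a ^ 2 <= 2 ^ a)%N.
Proof.
move=> h; rewrite -(subnK h); elim: (a - 4)%N => [//|k IH].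
rewrite addSn [2 ^ _]expnS; apply: (@leq_trans (2 * (k + 4) ^ 2)); last by rewrite leq_mul2l.
nia.
Qed.

Lemma card_mem (Y : finType) (S : {set Y}) : #|S| = (\sum_v (v \in S))%N.
Proof. by rewrite -card_all; apply: eq_card => v; rewrite inE. Qed.

Section Final.
Variable R : realType.
Local Open Scope ring_scope.

Lemma good_count n (A : {set 'I_n}) a : #|A| = a -> n = (a + a)%N -> (10000 <= a)%N ->
  ((2 ^ a) * (#|{ffun pt n -> bool}| - #|[set b : {ffun pt n -> bool} |
        `[< far_from_juntas (1/5 : R) a (fno R A b) >] ]|) <= 1250 * a * #|{ffun pt n -> bool}|)%N.
Proof.
move=> hA hn ha.
have ha2 : n./2 = a by rewrite hn addnn doubleK.
set G := [set b : {ffun pt n -> bool} | `[< far_from_juntas (1/5 : R) a (fno R A b) >] ].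
set Tt := #|{ffun pt n -> bool}|.
pose bad i := [set b : {ffun pt n -> bool} | 50 * Dc (FS (~: A)) (flipf i) b < 24 * #|FS (~: A)|]%N.
have cardC : #|~: A| = a.
  by have := cardsC A; rewrite hA card_ord; lia.
have hFC : #|FS (~: A)| = (2 ^ a)%N by rewrite card_FS cardC.
have hbad : forall i, i \in ~: A -> (#|bad i| * 2 ^ a <= 1250 * Tt)%N.
  move=> i hi; rewrite -hFC; apply: cheb.
  - by move=> v; apply: FS_flip.
  - by move=> v; apply: flipf_neq.
  - exact: flipfK.
have hcov : (Tt <= #|G| + \sum_(i in ~: A) #|bad i|)%N.
  rewrite /Tt -cardsT (card_mem [set: _]) (card_mem G).
  under [X in (_ <= _ + X)%N]eq_bigr => i _ do rewrite card_mem.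
  rewrite exchange_big -big_split /=.
  apply: leq_sum => b _.
  case: (boolP [exists i in ~: A, b \in bad i]).
    move=> /exists_inP [i hi hb]; rewrite (bigD1 i) //= hb; lia.
  move=> hno; rewrite in_setT; suff -> : b \in G by [].
  rewrite inE; apply/asboolP; apply: (det hA hn).
  - exact: (Lbound R hA ha2 ha).
  - by apply: hsym; rewrite hA ha2.
  - move=> i hi; case: (leqP (24 * 2 ^ a) (50 * Dc (FS (~: A)) (flipf i) b))%N => // hlt.
    exfalso; move/negP: hno; apply; apply/exists_inP; exists i => //.
    by rewrite inE hFC.
have hsum : ((\sum_(i in ~: A) #|bad i|) * 2 ^ a <= 1250 * a * Tt)%N.
  rewrite big_distrl /=.
  apply: (@leq_trans (\sum_(i in ~: A) 1250 * Tt)%N); first by apply: leq_sum => i hi; apply: hbad.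
  rewrite sum_nat_const cardC; lia.
have : (Tt - #|G| <= \sum_(i in ~: A) #|bad i|)%N by lia.
move=> h; apply: leq_trans hsum; rewrite mulnC; exact: leq_mul.
Qed.
End Final.

Local Open Scope ring_scope.
Theorem mainTheorem12 (R : realType) (eps : R) (heps : 0 < eps) :
  exists N : nat, forall n : nat, ~~ odd n -> (N <= n)%N ->
    1 - eps <= @prob_no R n (fun f => @far_from_juntas R n (1/5) n./2 f).
Proof.
set K := maxn 10000 (Num.truncn (1250 / eps)).+1.
exists (K + K)%N => n hodd hN.
set a := n./2.
have hn : n = (a + a)%N by rewrite addnn /a even_halfK.
have haK : (K <= a)%N by move: hN; rewrite hn; lia.
have ha : (10000 <= a)%N by move: haK; rewrite /K geq_max => /andP [].
have ha2 : ((Num.truncn (1250 / eps)).+1 <= a)%N by move: haK; rewrite /K geq_max => /andP [].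
have hepsa : 1250 < eps * a%:R.
  have h1 := truncnS_gt (1250 / eps).
  have h2 : ((Num.truncn (1250 / eps)).+1%:R : R) <= a%:R by rewrite ler_nat.
  have h3 : 1250 / eps < a%:R by apply: lt_le_trans h2.
  by rewrite ltr_pdivrMr // mulrC in h3.
have h4 : (4 <= a)%N by apply: leq_trans ha.
have hpow : ((a ^ 2)%:R : R) <= (2 ^ a)%:R by rewrite ler_nat sq_le_pow2.
set Tt := #|{ffun pt n -> bool}|.
have hT : (0 < Tt)%N by apply/card_gt0P; exists [ffun=> false].
have hq : forall A : {set 'I_n}, A \in [set A : {set 'I_n} | #|A| == n./2] ->
  1 - eps <= #|[set b : {ffun pt n -> bool} | `[< far_from_juntas (1/5 : R) n./2 (fno R A b) >] ]|%:R / Tt%:R.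
  move=> A; rewrite inE => /eqP hA.
  have hg := good_count R hA hn ha.
  set g := #|[set b : {ffun pt n -> bool} | _]| in hg *.
  have hgT : (g <= Tt)%N by rewrite /g /Tt; apply: max_card.
  have hTr : (0 : R) < Tt%:R by rewrite ltr0n.
  rewrite ler_pdivlMr //.
  have hgr : ((2 ^ a)%:R : R) * (Tt%:R - g%:R) <= 1250 * a%:R * Tt%:R.
    by rewrite -natrB // -!natrM ler_nat.
  have hp : (0 : R) < (2 ^ a)%:R by rewrite ltr0n expn_gt0.
  have ha0 : (0 : R) <= a%:R by rewrite ler0n.
  rewrite natrX in hpow.
  have t1 : 1250 * a%:R <= (eps * a%:R) * a%:R by apply: ler_wpM2r => //; apply: ltW.
  have t2 : (eps * a%:R) * a%:R <= eps * (2 ^ a)%:R.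
    by rewrite -mulrA -expr2 ler_wpM2l // ltW.
  have s1 := le_trans t1 t2.
  have s2 : (2 ^ a)%:R * (Tt%:R - g%:R) <= (2 ^ a)%:R * (eps * Tt%:R).
    apply: le_trans hgr _.
    have -> : ((2 ^ a)%:R : R) * (eps * Tt%:R) = (eps * (2 ^ a)%:R) * Tt%:R by ring.
    by apply: ler_wpM2r => //; apply: ltW.
  rewrite ler_pM2l // in s2; lra.
rewrite /prob_no.
set As := [set A : {set 'I_n} | #|A| == n./2].
have hAs : (0 < #|As|)%N.
  rewrite /As card_draws card_ord bin_gt0 /a; lia.
rewrite ler_pdivlMr ?ltr0n //.
apply: (@le_trans _ _ (\sum_(A in As) (1 - eps))).
  by rewrite sumr_const mulr_natr.
by apply: ler_sum => A hA; apply: hq.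
Qed.
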